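(* For every $m \in \mathbb{N}$, the $m$-uniform hypergraph $\mathcal{H}_m = (V, \mathcal{E}_s \cup \mathcal{E}_p)$ defined below admits a realization with bottomless rectangles and horizontal strips: there is an injective map $\pi\colon V \to \mathbb{R}^2$ such that for every hyperedge $E$ of $\mathcal{H}_m$ there is a range $R \in \mathcal{R}_{\rm BL} \cup \mathcal{R}_{\rm HS}$ with $\pi(V) \cap R = \pi(E)$.
   Context: Construction of $\mathcal{H}_m$: first a rooted forest $F_m$ with $m^m$ trees is built, whose vertices are partitioned into ''stages''; each stage $S$ carries a total order $<_S$, and all vertices of a stage have the same distance $j$ (the level of $S$) to the root of their tree; a stage on level $j \in \{0,\dots,m-1\}$ has $m^{m-j}$ vertices. Start with $m^m$ roots, which form the unique stage on level $0$, ordered in an arbitrary fixed way. Then, for every already defined stage $S$ on level $j < m-1$ and every subset $S' \subseteq S$ with $|S'| = m^{m-j-1}$, add a new stage $T(S')$ on level $j+1$ consisting of $m^{m-j-1}$ new vertices such that every vertex of $S'$ gets exactly one child from $T(S')$, and order $T(S')$ by $<_{T(S')}$ as their parents are ordered by $<_S$. $\mathcal{H}_m$ has vertex set $V = V(F_m)$; its hyperedges are the stage-hyperedges $\mathcal{E}_s$ (for every stage $S$, each set of $m$ consecutive vertices in $<_S$) and the path-hyperedges $\mathcal{E}_p$ (the vertex set of every root-to-leaf path in $F_m$). Bottomless rectangles: $\mathcal{R}_{\rm BL} = \{\{(x,y) : a_1 \leq x \leq a_2,\ y \leq b\} : a_1,a_2,b \in \mathbb{R}\}$; horizontal strips: $\mathcal{R}_{\rm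 HS} = \{\{(x,y) : b_1 \leq y \leq b_2\} : b_1,b_2 \in \mathbb{R}\}$. *)

(* Defs.v *)
From Stdlib Require Import Reals.
From mathcomp Require Import all_boot.

Set Implicit Arguments.
Unset Strict Implicit.
Unset Printing Implicit Defensive.

(* A stage on level j is encoded by its construction history           *)
(*   As = [:: A_j; A_{j-1}; ...; A_1]   (most recent choice first),      *)
(* where A_{i+1} is the chosen subset S' of the stage on level i,        *)
(* given as the strictly increasing list of positions (w.r.t. the order *)
(* of that stage) of the chosen vertices.  The root stage is [::] and    *)
(* its m^m vertices are ordered by position 0 < 1 < ... < m^m - 1.      *)
(* A vertex is a pair (As, p): the vertex at position p of stage As;    *)
(* the order <_S of a stage is the order of positions.                  *)

Definition stage_size (m j : nat) : nat := m ^ (m - j).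

Fixpoint valid_stage (m : nat) (As : seq (seq nat)) : bool :=
  match As with
  | [::] => true
  | A :: rest =>
      [&& valid_stage m rest,
          (size rest).+1 <= m.-1,
          sorted ltn A,
          all (fun x => x < stage_size m (size rest)) A
        & size A == stage_size m (size rest).+1]
  end.

Definition raw_vertex := (seq (seq nat) * nat)%type.

Definition valid_vertex (m : nat) (v : raw_vertex) : bool :=
  valid_stage m v.1 && (v.2 < stage_size m (size v.1)).

Definition vertex (m : nat) := {v : raw_vertex | valid_vertex m v}.

Definition vstage (m : nat) (v : vertex m) : seq (seq nat) := (proj1_sig v).1.
Definition vpos (m : nat) (v : vertex m) : nat := (proj1_sig v).2.

(* Parent in F_m: the vertex at position p of stage T(S') (S' encoded by *)
(* A) is the child of the p-th vertex of S' (in the order of S), which   *)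
(* sits at position nth 0 A p of the parent stage.                       *)
Definition parent (v : raw_vertex) : option raw_vertex :=
  match v.1 with
  | [::] => None
  | A :: rest => Some (rest, nth 0 A v.2)
  end.

Definition anc_or_self (m : nat) (u w : vertex m) : Prop :=
  exists k : nat, iter k (fun o => obind parent o) (Some (proj1_sig w))
                  = Some (proj1_sig u).

Definition is_leaf (m : nat) (l : vertex m) : Prop :=
  ~ exists w : vertex m, parent (proj1_sig w) = Some (proj1_sig l).

Definition stage_hyperedge (m : nat) (E : vertex m -> Prop) : Prop :=
  exists (As : seq (seq nat)) (k : nat),
    valid_stage m As /\ k + m <= stage_size m (size As) /\
    forall v : vertex m, E v <-> (vstage v = As /\ k <= vpos v < k + m).

Definition path_hyperedge (m : nat) (E : vertex m -> Prop) : Prop :=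
  exists l : vertex m, is_leaf l /\
    forall v : vertex m, E v <-> anc_or_self v l.

Definition hyperedge (m : nat) (E : vertex m -> Prop) : Prop :=
  stage_hyperedge E \/ path_hyperedge E.

Definition point := (R * R)%type.

Definition in_bottomless (a1 a2 b : R) (q : point) : Prop :=
  Rle a1 (fst q) /\ Rle (fst q) a2 /\ Rle (snd q) b.

Definition in_hstrip (b1 b2 : R) (q : point) : Prop :=
  Rle b1 (snd q) /\ Rle (snd q) b2.

Definition is_BL_or_HS_range (Rg : point -> Prop) : Prop :=
  (exists a1 a2 b : R, forall q, Rg q <-> in_bottomless a1 a2 b q) \/
  (exists b1 b2 : R, forall q, Rg q <-> in_hstrip b1 b2 q).

(* Main.v *)
Require Import Defs.
From Stdlib Require Import Reals Lra.
From mathcomp Require Import all_boot zify.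

Fixpoint enc (D n : nat) (s : seq nat) : nat :=
  match n with
  | 0 => 0
  | n'.+1 => head 0 s * D ^ n' + enc D n' (behead s)
  end.

Lemma enc_nil D n : enc D n [::] = 0.
Proof. by elim: n => //= n ->; rewrite mul0n. Qed.

Lemma enc_lt D n s : 0 < D -> all (fun x => x < D) s -> size s <= n -> enc D n s < D ^ n.
Proof.
move=> D0; elim: n s => [|n IH] [|a s] //=.
- move=> _ _; by rewrite enc_nil mul0n add0n expn_gt0 D0.
- move=> /andP[aD sD] sz; have := IH s sD sz; rewrite expnS; nia.
Qed.

Lemma enc_cat D n c s : size c <= n -> enc D n (c ++ s) = enc D n c + enc D (n - size c) s.
Proof.
elim: c n => [|a c IH] [|n] //=.
- by move=> _; rewrite enc_nil mul0n.
- by move=> sz; rewrite IH // addnA subSS.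
Qed.

Lemma enc_lex D n c a b s t : 0 < D -> a < b ->
  all (fun x => x < D) (c ++ a :: s) -> size (c ++ a :: s) <= n ->
  size (c ++ b :: t) <= n ->
  enc D n (c ++ a :: s) < enc D n (c ++ b :: t).
Proof.
move=> D0 ab dig sz1 sz2.
have szc : size c < n by move: sz1; rewrite size_cat /=; lia.
rewrite !enc_cat; try lia.
rewrite ltn_add2l.
have [k Hk] : exists k, n - size c = k.+1 by exists (n - size c).-1; lia.
rewrite Hk /=.
have : enc D k s < D ^ k.
  apply: enc_lt => //; first by move: dig; rewrite all_cat /= => /and3P[].
  by move: sz1; rewrite size_cat /=; lia.
nia.
Qed.

Lemma enc_prefix_lt D n c a u : 0 < D -> 0 < a -> size (c ++ a :: u) <= n ->
  enc D n c < enc D n (c ++ a :: u).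
Proof.
move=> D0 a0 sz.
have szc : size c < n by move: sz; rewrite size_cat /=; lia.
rewrite enc_cat; last lia.
have [k Hk] : exists k, n - size c = k.+1 by exists (n - size c).-1; lia.
rewrite Hk /=.
have := expn_gt0 D k; rewrite D0 /=; nia.
Qed.

Lemma enc_prefix_le D n c u : size c <= n -> enc D n c <= enc D n (c ++ u).
Proof. by move=> sz; rewrite enc_cat // leq_addr. Qed.

Lemma seq_trich (T : eqType) (s t : seq T) :
  s = t \/ (exists a u, t = s ++ a :: u) \/ (exists a u, s = t ++ a :: u) \/
  exists c a b s' t', a <> b /\ s = c ++ a :: s' /\ t = c ++ b :: t'.
Proof.
elim: s t => [|a s IH] [|b t].
- by left.
- by right; left; exists b, t.
- by right; right; left; exists a, s.
- case: (eqVneq a b) => [<-|ab].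
  + case: (IH t) => [->|[[x [u ->]]|[[x [u ->]]|[c [x [y [s' [t' [xy [-> ->]]]]]]]]]].
    * by left.
    * by right; left; exists x, u.
    * by right; right; left; exists x, u.
    * by right; right; right; exists (a :: c), x, y, s', t'.
  + right; right; right; exists [::], a, b, s, t; split => //; exact/eqP.
Qed.

Lemma enc_inj D n s t : 0 < D ->
  all (fun x => 0 < x < D) s -> all (fun x => 0 < x < D) t ->
  size s <= n -> size t <= n -> enc D n s = enc D n t -> s = t.
Proof.
move=> D0 ds dt ss st.
have lt_of : forall u, all (fun x => 0 < x < D) u -> all (fun x => x < D) u.
  by move=> u; apply: sub_all => x /andP[].
case: (seq_trich _ s t) => [//|[[a [u Ht]]|[[a [u Hs]]|[c [a [b [s' [t' [ab [Hs Ht]]]]]]]]]].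
- have a0 : 0 < a by move: dt; rewrite Ht all_cat /= => /and3P[_ /andP[]].
  have := enc_prefix_lt D n s a u D0 a0; rewrite -Ht => /(_ st) /ltn_eqF; rewrite eq_sym => E.
  by move=> E'; rewrite E' eqxx in E.
- have a0 : 0 < a by move: ds; rewrite Hs all_cat /= => /and3P[_ /andP[]].
  have := enc_prefix_lt D n t a u D0 a0; rewrite -Hs => /(_ ss) /ltn_eqF E.
  by move=> E'; rewrite E' eqxx in E.
- have dsl := lt_of _ ds; have dtl := lt_of _ dt.
  case: (ltngtP a b) => [lab|lba|eab] //.
  + rewrite Hs Ht in dsl ss st *.
    by move/eqP; rewrite ltn_eqF // (enc_lex D n c a b s' t' D0 lab dsl ss st).
  + rewrite Hs Ht in dtl ss st *.
    by move/eqP; rewrite eq_sym ltn_eqF // (enc_lex D n c b a t' s' D0 lba dtl st ss).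
Qed.

Set Implicit Arguments. Unset Strict Implicit.
Section S.
Variable m : nat.
Definition NN := m ^ m.
Definition BB := NN.+1.
Definition code (A : seq nat) := enc BB NN (map S A).
Definition CC := BB ^ NN.
Definition DD := CC + NN + 2.
Definition dg A := (code A).+1.
Definition ed A := DD - dg A.
Definition ys (As : seq (seq nat)) := map dg (rev As).
Definition key As := enc DD m (ys As).
Definition Yc (v : raw_vertex) := key v.1 * BB + v.2.
Fixpoint rootpos (As : seq (seq nat)) (p : nat) : nat :=
  match As with [::] => p | A :: rest => rootpos rest (nth 0 A p) end.
Definition xs (v : raw_vertex) := rootpos v.1 v.2 :: map ed (rev v.1).
Definition Xc (v : raw_vertex) := enc DD m.+1 (xs v).

Definition okA (A : seq nat) := all (fun x => x < NN) A && (size A <= NN).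

Lemma stage_size_le j : stage_size m j <= NN.
Proof.
rewrite /stage_size /NN; case: m => [|k]; first by rewrite sub0n.
by rewrite leq_pexp2l // leq_subr.
Qed.

Lemma valid_ok As : valid_stage m As -> all okA As.
Proof.
elim: As => //= A rest IH /and5P[v _ _ al sz]; rewrite IH // andbT /okA.
rewrite (eqP sz) stage_size_le andbT.
by apply: sub_all al => x /leq_trans; apply; apply: stage_size_le.
Qed.

Lemma valid_size As : valid_stage m As -> size As <= m.-1.
Proof. by case: As => //= A rest /and5P[]. Qed.

Lemma BB0 : 0 < BB. Proof. by []. Qed.

Lemma code_lt A : okA A -> code A < CC.
Proof.
case/andP=> al sz; apply: enc_lt => //; last by rewrite size_map.
by rewrite all_map; apply: sub_all al => x /=.
Qed.

Lemma code_inj A A' : okA A -> okA A' -> code A = code A' -> A = A'.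
Proof.
case/andP=> al sz /andP[al' sz'] /enc_inj H.
have dig : forall A, all (fun x => x < NN) A -> all (fun x => 0 < x < BB) (map S A).
  by move=> B0 aB; rewrite all_map; apply: sub_all aB => x /=.
have := H isT (dig _ al) (dig _ al'); rewrite !size_map => /(_ sz sz').
by move/(inj_map succn_inj).
Qed.

Lemma dg_bounds A : okA A -> 0 < dg A < DD.
Proof. by move/code_lt; rewrite /dg /DD; lia. Qed.

Lemma ed_bounds A : okA A -> 0 < ed A < DD.
Proof. by move/dg_bounds; rewrite /ed; lia. Qed.

Lemma DD0 : 0 < DD. Proof. rewrite /DD; lia. Qed.

Lemma map_dg_inj s t : all okA s -> all okA t -> map dg s = map dg t -> s = t.
Proof.
elim: s t => [|a s IH] [|b t] //= /andP[oa os] /andP[ob ot] [E1 E2].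
by rewrite (code_inj oa ob E1) (IH t os ot E2).
Qed.

Lemma map_ed_inj s t : all okA s -> all okA t -> map ed s = map ed t -> s = t.
Proof.
move=> os ot E; apply: map_dg_inj => //.
elim: s t os ot E => [|a s IH] [|b t] //= /andP[oa os] /andP[ob ot] [E1 E2].
rewrite (IH t os ot E2); congr (_ :: _).
move: (dg_bounds oa) (dg_bounds ob) E1; rewrite /ed; lia.
Qed.

Lemma valid_parent A rest p : valid_vertex m (A :: rest, p) -> valid_vertex m (rest, nth 0 A p).
Proof.
rewrite /valid_vertex /= => /andP[/and5P[v _ _ al sz] lt]; rewrite v /=.
by apply: (allP al); apply: mem_nth; rewrite (eqP sz).
Qed.

Lemma rootpos_lt As p : valid_vertex m (As, p) -> rootpos As p < NN.
Proof.
elim: As p => [|A rest IH] p /=.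
  by rewrite /valid_vertex /= /stage_size subn0.
by move/valid_parent/IH.
Qed.

Lemma rootpos_inj As p p' : valid_vertex m (As, p) -> valid_vertex m (As, p') ->
  rootpos As p = rootpos As p' -> p = p'.
Proof.
elim: As p p' => [|A rest IH] p p' //= V V' E.
have := IH _ _ (valid_parent V) (valid_parent V') E.
move: V V'; rewrite /valid_vertex /= => /andP[/and5P[_ _ so _ sz] lt] /andP[_ lt'].
move=> /eqP; rewrite nth_uniq; first by move/eqP.
- by rewrite (eqP sz).
- by rewrite (eqP sz).
- by move: so; rewrite ltn_sorted_uniq_leq => /andP[].
Qed.

Definition upn k (v : raw_vertex) := iter k (fun o => obind parent o) (Some v).

Lemma up_some k v w : valid_vertex m v -> upn k v = Some w ->
  [/\ k <= size v.1, w.1 = drop k v.1, rootpos w.1 w.2 = rootpos v.1 v.2 & valid_vertex m w].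
Proof.
move=> V; elim: k w => [|k IH] w /=.
  by case=> <-; rewrite drop0.
rewrite -/(upn k v); case E: (upn k v) => [w'|] //=.
case: (IH w' E) => le d r V'.
case: w' E d r V' => [[|A rest] q] //= E d r V' [<-] /=.
have lt : k < size v.1.
  by rewrite ltnNge; apply/negP => /drop_oversize; rewrite -d.
split => //.
- by rewrite (_ : k.+1 = 1 + k) // -drop_drop -d /= drop0.
- exact: (valid_parent V').
Qed.

Lemma up_exists k v : valid_vertex m v -> k <= size v.1 -> exists w, upn k v = Some w.
Proof.
move=> V; elim: k => [|k IH] lt /=; first by exists v.
case: (IH (ltnW lt)) => w E; rewrite -/(upn k v) E /=.
case: (up_some V E) => _ d _ _.
case: w E d => [[|A rest] q] E d /=.
  by move: lt; have := size_drop k v.1; rewrite -d /=; lia.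
by exists (rest, nth 0 A q).
Qed.

Lemma ys_cat pre As : ys (pre ++ As) = ys As ++ map dg (rev pre).
Proof. by rewrite /ys rev_cat map_cat. Qed.

Lemma valid_vertex_stage v : valid_vertex m v -> valid_stage m v.1.
Proof. by case/andP. Qed.

Lemma xs_size v : valid_vertex m v -> size (xs v) <= m.+1.
Proof. move/valid_vertex_stage/valid_size; rewrite /= size_map size_rev; lia. Qed.

Lemma ys_size As : valid_stage m As -> size (ys As) <= m.
Proof. move/valid_size; rewrite /ys size_map size_rev; lia. Qed.

Lemma xs_dig v : valid_vertex m v -> all (fun x => x < DD) (xs v).
Proof.
move=> V; rewrite /=.
have -> : rootpos v.1 v.2 < DD.
  have := rootpos_lt (As:=v.1) (p:=v.2); case: v V => [s p] V /= /(_ V); rewrite /DD; lia.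
rewrite /= all_map all_rev; apply: sub_all (valid_ok (valid_vertex_stage V)).
by move=> A /ed_bounds /andP[].
Qed.

Lemma ys_dig As : valid_stage m As -> all (fun x => 0 < x < DD) (ys As).
Proof.
move=> V; rewrite /ys all_map all_rev; apply: sub_all (valid_ok V).
by move=> A /dg_bounds.
Qed.

Lemma key_inj As As' : valid_stage m As -> valid_stage m As' -> key As = key As' -> As = As'.
Proof.
move=> V V' /(enc_inj _ _ _ _ DD0 (ys_dig V) (ys_dig V') (ys_size V) (ys_size V')).
move/map_dg_inj; rewrite !all_rev => /(_ (valid_ok V) (valid_ok V')).
exact: (can_inj revK).
Qed.

Lemma split_BB a p a' p' : p < BB -> p' < BB -> a * BB + p = a' * BB + p' -> a = a' /\ p = p'.
Proof.
move=> lp lp' E; case: (ltngtP a a') => H.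
- exfalso; have : a * BB + BB <= a' * BB by nia. lia.
- exfalso; have : a' * BB + BB <= a * BB by nia. lia.
- by subst; split => //; lia.
Qed.

Lemma pos_lt v : valid_vertex m v -> v.2 < BB.
Proof.
case/andP=> _ lt; apply: (leq_trans lt); rewrite /BB; have := stage_size_le (size v.1); lia.
Qed.

Lemma Yc_inj v w : valid_vertex m v -> valid_vertex m w -> Yc v = Yc w -> v = w.
Proof.
move=> V W E; case: (split_BB (pos_lt V) (pos_lt W) E) => /(key_inj (valid_vertex_stage V) (valid_vertex_stage W)).
by case: v V E => [s p]; case: w W => [s' p'] /= _ _ _ -> ->.
Qed.

Lemma stage_edge As k v : valid_stage m As -> k + m <= stage_size m (size As) -> valid_vertex m v ->
  (key As * BB + k <= Yc v < key As * BB + k + m) <-> (v.1 = As /\ k <= v.2 < k + m).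
Proof.
move=> VA km V; have lp := pos_lt V.
have kmB : k + m < BB by have := stage_size_le (size As); rewrite /BB; lia.
split.
- rewrite /Yc => /andP[h1 h2].
  have E : key v.1 = key As.
    case: (ltngtP (key v.1) (key As)) => // H; exfalso.
    + have : key v.1 * BB + BB <= key As * BB by nia. lia.
    + have : key As * BB + BB <= key v.1 * BB by nia. lia.
  have := key_inj (valid_vertex_stage V) VA E => ->; split => //.
  by move: h1 h2; rewrite E; lia.
- case=> e /andP[h1 h2]; rewrite /Yc e; apply/andP; lia.
Qed.
End S.
Set Implicit Arguments. Unset Strict Implicit.

Section T.
Variable m : nat.

Lemma xs_cat pre As p q : xs m (pre ++ As, p) = xs m (As, q) ++ map (ed m) (rev pre)
  <-> rootpos (pre ++ As) p = rootpos As q.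
Proof.
rewrite /xs /= rev_cat map_cat -cat_cons; split; first by case.
by move=> ->.
Qed.

Lemma anc_window l k w : valid_vertex m l -> upn k l = Some w ->
  [/\ Xc m ([::], rootpos l.1 l.2) <= Xc m w, Xc m w <= Xc m l & Yc m w <= Yc m l].
Proof.
case: l => [s p] L U; case: (up_some L U) => /= kle d r W.
case: w U d r W => [s' q] /= U d r W.
have lsplit : s = take k s ++ s' by rewrite d cat_take_drop.
have xl : xs m (s, p) = xs m (s', q) ++ map (ed m) (rev (take k s)).
  by rewrite {1}lsplit; apply/xs_cat; rewrite -lsplit r.
have xw : xs m (s', q) = [:: rootpos s p] ++ map (ed m) (rev s') by rewrite /xs /= r.
split.
- rewrite /Xc xw; apply: (enc_prefix_le _ _ [:: _]) => /=; lia.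
- rewrite /Xc xl; apply: enc_prefix_le; exact: xs_size.
- case E: (take k s) => [|A u].
  + rewrite E /= in lsplit; rewrite -lsplit in W r *.
    by rewrite (rootpos_inj W L r).
  + have lt : key m s' < key m s.
      rewrite /key lsplit E ys_cat.
      have : rev (A :: u) != [::] by rewrite -size_eq0 size_rev.
      have okp : all (okA m) (A :: u).
        have := valid_ok (valid_vertex_stage L); rewrite lsplit E all_cat => /andP[].
        done.
      rewrite -all_rev in okp.
      case E2: (rev (A :: u)) okp => [|a u'] // /andP[oa _] _ /=.
      apply: enc_prefix_lt; first exact: DD0.
      - by case/andP: (dg_bounds oa).
      - by have := ys_size (valid_vertex_stage L); rewrite lsplit E ys_cat E2.
    rewrite /Yc /=; have := pos_lt W; rewrite /=; nia.
Qed.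

Lemma Xc_lex v w c a b s t : valid_vertex m v -> valid_vertex m w ->
  xs m v = c ++ a :: s -> xs m w = c ++ b :: t -> a < b -> Xc m v < Xc m w.
Proof.
move=> V W Ev Ew ab; rewrite /Xc Ev Ew; apply: enc_lex => //; first exact: DD0.
- by rewrite -Ev; apply: xs_dig.
- by rewrite -Ev; apply: xs_size.
- by rewrite -Ew; apply: xs_size.
Qed.

Lemma key_lex As As' c a b s t : valid_stage m As -> valid_stage m As' ->
  ys m As = c ++ a :: s -> ys m As' = c ++ b :: t -> a < b -> key m As < key m As'.
Proof.
move=> V W Ev Ew ab; rewrite /key Ev Ew; apply: enc_lex => //; first exact: DD0.
- rewrite -Ev; apply: sub_all (ys_dig V) => x /andP[] //.
- by rewrite -Ev; apply: ys_size.
- by rewrite -Ew; apply: ys_size.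
Qed.

Lemma window_anc l v : valid_vertex m l -> valid_vertex m v ->
  (forall w, valid_vertex m w -> parent w <> Some l) ->
  Xc m ([::], rootpos l.1 l.2) <= Xc m v -> Xc m v <= Xc m l -> Yc m v <= Yc m l ->
  exists k, upn k l = Some v.
Proof.
case: l => [s p] L; case: v => [s' q] V leaf /= h1 h2 h3.
have R : valid_vertex m ([::], rootpos s p).
  by rewrite /valid_vertex /= /stage_size subn0; exact: rootpos_lt L.
have r : rootpos s' q = rootpos s p.
  case: (ltngtP (rootpos s' q) (rootpos s p)) => // H; exfalso.
  - have := Xc_lex (c := [::]) V R erefl erefl H; lia.
  - have := Xc_lex (c := [::]) L V erefl erefl H; lia.
case: (seq_trich _ (rev s') (rev s)) => [E|[[A [u E]]|[[A [u E]]|[c [A [A' [s1 [t1 [AA [E1 E2]]]]]]]]]].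
- have es : s' = s by apply: (can_inj revK).
  subst s'; rewrite (rootpos_inj V L r); by exists 0.
- have es : s = rev (A :: u) ++ s' by rewrite -[s]revK E rev_cat revK.
  have kle : size (rev (A :: u)) <= size (s, p).1 by rewrite /= es size_cat leq_addr.
  case: (up_exists L kle) => w U.
  case: (up_some L U) => _ d rw W.
  rewrite /= {1}es drop_size_cat // in d.
  case: w U d rw W => [s2 q2] U /= d rw W; subst s2.
  rewrite -r in rw; rewrite -(rootpos_inj W V rw); by exists (size (rev (A :: u))).
- have es : s' = rev u ++ A :: s by rewrite -[s']revK E rev_cat revK rev_cons cat_rcons.
  have kle : size (rev u) <= size (s', q).1 by rewrite /= es size_cat leq_addr.
  case: (up_exists V kle) => w U.
  case: (up_some V U) => _ d rw W.
  rewrite /= {1}es drop_size_cat // in d.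
  case: w U d rw W => [s2 q2] U /= d rw W; subst s2.
  have U2 : upn (size (rev u)).+1 (s', q) = Some (s, nth 0 A q2) by rewrite /upn /= -/(upn _ _) U.
  case: (up_some V U2) => _ _ /= rw2 W2.
  rewrite r in rw2; have e := rootpos_inj W2 L rw2.
  exfalso; apply: (leaf _ W); by rewrite /parent /= e.
- have okv : all (okA m) (rev s') by rewrite all_rev; exact: valid_ok (valid_vertex_stage V).
  have okl : all (okA m) (rev s) by rewrite all_rev; exact: valid_ok (valid_vertex_stage L).
  have oA : okA m A by rewrite E1 all_cat /= in okv; case/and3P: okv.
  have oA' : okA m A' by rewrite E2 all_cat /= in okl; case/and3P: okl.
  have xv : xs m (s', q) = (rootpos s p :: map (ed m) c) ++ ed m A :: map (ed m) s1.
    by rewrite /xs /= E1 map_cat r.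
  have xl : xs m (s, p) = (rootpos s p :: map (ed m) c) ++ ed m A' :: map (ed m) t1.
    by rewrite /xs /= E2 map_cat.
  have yv : ys m s' = map (dg m) c ++ dg m A :: map (dg m) s1 by rewrite /ys E1 map_cat.
  have yl : ys m s = map (dg m) c ++ dg m A' :: map (dg m) t1 by rewrite /ys E2 map_cat.
  exfalso; case: (ltngtP (dg m A) (dg m A')) => H.
  + have H' : ed m A' < ed m A.
      move: (dg_bounds oA) (dg_bounds oA') H; rewrite /ed; lia.
    have := Xc_lex L V xl xv H'; lia.
  + have := key_lex (valid_vertex_stage L) (valid_vertex_stage V) yl yv H.
    move: h3; rewrite /Yc /=; have := pos_lt L; rewrite /=; nia.
  + by apply: AA; apply: code_inj oA oA' _; case: H.
Qed.
End T.

Lemma INR_le_iff a b : Rle (INR a) (INR b) <-> a <= b.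
Proof. split => [/INR_le/leP //|/leP/le_INR //]. Qed.

Lemma INR_le_m1_iff a b : Rle (INR a) (Rminus (INR b) 1) <-> a < b.
Proof.
case: b => [|b].
- split => // H; have := pos_INR a; simpl in H; lra.
- rewrite S_INR (_ : Rminus (Rplus (INR b) 1) 1 = INR b); last by ring.
  exact: INR_le_iff.
Qed.

Lemma reduce_range (m : nat) (pi : vertex m -> point) (E : vertex m -> Prop) (Rg : point -> Prop) :
  (forall v, Rg (pi v) <-> E v) ->
  forall q, ((exists v, pi v = q) /\ Rg q) <-> (exists v, E v /\ pi v = q).
Proof.
move=> H q; split.
- by case=> [[v <-] Rq]; exists v; split => //; apply/H.
- by case=> v [Ev <-]; split; [exists v | apply/H].
Qed.

Theorem theorem10 :
  forall m : nat,
    exists pi : vertex m -> point,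
      injective pi /\
      forall E : vertex m -> Prop, hyperedge E ->
        exists Rg : point -> Prop,
          is_BL_or_HS_range Rg /\
          (* pi(V) ∩ Rg = pi(E) *)
          forall q : point,
            ((exists v : vertex m, pi v = q) /\ Rg q) <->
            (exists v : vertex m, E v /\ pi v = q).
Proof.
move=> m.
exists (fun v => (INR (Xc m (proj1_sig v)), INR (Yc m (proj1_sig v)))); split.
  move=> v w [_ /INR_eq E]; apply: val_inj.
  exact: Yc_inj (proj2_sig v) (proj2_sig w) E.
move=> E [[As [k [VA [km HE]]]]|[l [leaf HE]]].
- exists (in_hstrip (INR (key m As * BB m + k)) (Rminus (INR (key m As * BB m + k + m)) 1)); split.
    by right; exists (INR (key m As * BB m + k)), (Rminus (INR (key m As * BB m + k + m)) 1).
  apply: reduce_range => v; rewrite HE /in_hstrip /= INR_le_iff INR_le_m1_iff.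
  rewrite -(stage_edge VA km (proj2_sig v)).
  exact: (rwP andP).
- exists (in_bottomless (INR (Xc m ([::], rootpos (proj1_sig l).1 (proj1_sig l).2)))
     (INR (Xc m (proj1_sig l))) (INR (Yc m (proj1_sig l)))); split.
    left; do 3 eexists; move=> q0; reflexivity.
  apply: reduce_range => v; rewrite HE /in_bottomless /= !INR_le_iff.
  split.
  + case=> h1 [h2 h3].
    have := window_anc (proj2_sig l) (proj2_sig v) _ h1 h2 h3.
    apply => w W P; apply: leaf; by exists (exist _ w W).
  + case=> k U; case: (anc_window (proj2_sig l) U) => h1 h2 h3; by split.
Qed.
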